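(* Let $k,p,q$ be integers with $q>0$, $\gcd(p,q)=1$ and $kq-p$ odd, and let $Q=Q_2(L)$ be the involutory quandle with generators $a,b,c$ and defining relations $$R1: c^{ab}=c,\qquad R2: a^{(ca)^q}=b^{(ab)^{(kq-p-1)/2}},\qquad R3: a^{(ac)^q}=b^{(ab)^{(kq-p-1)/2}}.$$ Then the following relations also hold in $Q$: $c^{(ac)^{2q}}=c$; $a^{(ca)^{2q}}=a$; $b^{(cb)^{2q}}=b$; $a^{(ba)^{(kq-p-1)/2}}=b^{(bc)^q}$; $a^{(ca)^i(ba)^jc}=a^{(ca)^ic(ba)^j}$ and $a^{(ca)^i(ab)^jabc}=a^{(ca)^{i+1}(ba)^jb}$ for $0\le i\le q$ and $0\le j\le(\vert kq-p\vert-1)/2$; $c^{(ac)^ia}=c^{(ac)^ib}$ for all $i\ge 0$.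
   Context: An involutory quandle is a set with a binary operation $(x,y)\mapsto x^y$ satisfying $x^x=x$, $(x^y)^y=x$ and $(x^y)^z=(x^z)^{(y^z)}$; a presentation $\langle S\mid R\rangle_2$ denotes the involutory quandle generated by $S$ subject to $R$ and these axioms. Exponents are read left to right: $x^{yz}=(x^y)^z$, and $z^w$ for a word $w$ means successive action by its letters; negative powers are interpreted via $(xy)^{-1}=yx$ (e.g. $(ab)^{m}=(ba)^{-m}$). This presentation is the involutory quandle of $L=L(k,p/q)\cup C$, the two-bridge link built from a block of $k$ half-twists and a rational $p/q$-tangle together with an unknotted axis $C$, in the case $kq-p$ odd. *)

(* Defs.v *)
From mathcomp Require Import all_boot all_order all_algebra.
Set Implicit Arguments. Unset Strict Implicit. Unset Printing Implicit Defensive.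
Import Order.TTheory GRing.Theory Num.Theory.

Definition inv_quandle (T : Type) (op : T -> T -> T) : Prop :=
  [/\ (forall x, op x x = x),
      (forall x y, op (op x y) y = x) &
      (forall x y z, op (op x y) z = op (op x z) (op y z))].

(* x^w for a word w = [:: y1; ...; yn] : successive action, read left to right. *)
Definition act (T : Type) (op : T -> T -> T) (x : T) (w : seq T) : T :=
  foldl op x w.

(* Integer power of a word; negative powers use (y1...yn)^{-1} = yn...y1,
   so that e.g. (ab)^m = (ba)^{-m}. *)
Definition wpow (T : Type) (w : seq T) (m : int) : seq T :=
  match m with
  | Posz n => flatten (nseq n w)
  | Negz n => flatten (nseq n.+1 (rev w))
  end.

(* Main.v *)
Require Import Defs.
From mathcomp Require Import all_boot all_order all_algebra.
From Stdlib Require Import Setoid Morphisms.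
Import Order.TTheory GRing.Theory Num.Theory.

Section Q.
Variables (T : Type) (op : T -> T -> T).
Hypothesis HQ : inv_quandle op.
Definition E (u v : seq T) := forall x, act op x u = act op x v.
Lemma actcat x u v : act op x (u ++ v) = act op (act op x u) v.
Proof. exact: foldl_cat. Qed.
Lemma E_refl u : E u u. Proof. by []. Qed.
Lemma E_sym u v : E u v -> E v u. Proof. by move=> h x. Qed.
Lemma E_trans u v w : E u v -> E v w -> E u w. Proof. by move=> h1 h2 x; rewrite h1. Qed.
Global Instance E_eqv : Equivalence E.
Proof. split; [exact: E_refl|exact: E_sym|exact: E_trans]. Qed.
Global Instance cat_prop : Proper (E ==> E ==> E) (@cat T).
Proof. move=> u u' hu v v' hv x; by rewrite !actcat hu hv. Qed.
Global Instance cons_prop : Proper (eq ==> E ==> E) (@cons T).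
Proof. move=> y _ <- v v' hv x; exact: hv. Qed.
Global Instance act_prop x : Proper (E ==> eq) (act op x).
Proof. by move=> u v h. Qed.

Lemma idm x : op x x = x. Proof. by case: HQ. Qed.
Lemma invo x y : op (op x y) y = x. Proof. by case: HQ. Qed.
Lemma distr x y z : op (op x y) z = op (op x z) (op y z). Proof. by case: HQ. Qed.

Lemma act_self x w : act op x (x :: w) = act op x w.
Proof. by rewrite /act /= idm. Qed.
Lemma E_yy y u : E (y :: y :: u) u.
Proof. by move=> x /=; rewrite /act /= invo. Qed.
Lemma E_conj1 y z : E [:: op y z] [:: z; y; z].
Proof. move=> x /=; rewrite /act /=. by rewrite -[in LHS](invo x z) -distr. Qed.
Lemma E_conj y w : E [:: act op y w] (rev w ++ y :: w).
Proof.
elim: w y => [|z w IH] y //=.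
rewrite IH rev_cons -cats1 -catA /= => x.
rewrite !actcat /=. congr act. rewrite /act /=.
by have := E_conj1 y z (act op x (rev w)).
Qed.
Lemma E_inv w : E (w ++ rev w) [::].
Proof.
elim: w => [|z w IH] //= x.
rewrite rev_cons -cats1 catA /= actcat /act /= -/(act op _ _).
by have := IH (op x z); rewrite /E /= => ->; rewrite /act /= invo.
Qed.
Lemma E_inv' w : E (rev w ++ w) [::].
Proof. by have := E_inv (rev w); rewrite revK. Qed.

Lemma fix_comm z w : act op z w = z -> E (z :: w) (w ++ [:: z]).
Proof.
move=> h.
have h1 : E [:: z] (rev w ++ z :: w).
  rewrite -E_conj h; reflexivity.
symmetry. transitivity (w ++ (rev w ++ z :: w)).
  by apply: cat_prop; [reflexivity|exact: h1].
by rewrite catA E_inv.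
Qed.
Lemma fix_rev z w : act op z w = z -> act op z (rev w) = z.
Proof. by move=> h; rewrite -{1}h -actcat E_inv. Qed.

Definition pw (w : seq T) n := flatten (nseq n w).
Lemma pwS w n : pw w n.+1 = w ++ pw w n. Proof. by []. Qed.
Lemma pw0 w : pw w 0 = [::]. Proof. by []. Qed.
Lemma pwSr w n : pw w n.+1 = pw w n ++ w.
Proof. elim: n => [|n IH]; first by rewrite /pw /= cats0. by rewrite [LHS]pwS {1}IH catA. Qed.
Lemma pwD w m n : pw w (m + n) = pw w m ++ pw w n.
Proof. elim: m => [|m IH] //. by rewrite addSn !pwS IH catA. Qed.
Lemma pw2 w n : pw w (n.*2) = pw (w ++ w) n.
Proof. elim: n => [|n IH] //. by rewrite doubleS !pwS IH catA. Qed.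
Lemma pw_rev w n : rev (pw w n) = pw (rev w) n.
Proof. elim: n => [|n IH] //. by rewrite pwS rev_cat IH pwSr. Qed.
Lemma pw_lift x y z n : E (x ++ y) (z ++ x) -> E (x ++ pw y n) (pw z n ++ x).
Proof.
move=> h; elim: n => [|n IH]; first by rewrite cats0.
by rewrite !pwS catA h -catA IH catA.
Qed.
Lemma pw_liftl x y n : E (x ++ y) (y ++ x) -> E (pw x n ++ y) (y ++ pw x n).
Proof.
move=> h; elim: n => [|n IH]; first by rewrite cats0.
by rewrite !pwS -catA IH catA h catA.
Qed.
Lemma pw_fix z w n : act op z w = z -> act op z (pw w n) = z.
Proof. move=> h; elim: n => [|n IH] //. by rewrite pwS actcat h. Qed.

Section G.
Variables a b : T.
Local Notation tau := [:: a; b].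
Local Notation sig := [:: b; a].
Definition g (m : int) := if (0 <= m)%R then pw tau `|m| else pw sig `|m|.
Lemma g_neg m : (m <= 0)%R -> g m = pw sig `|m|.
Proof.
rewrite /g; case: (ltgtP m 0) => //. by move=> ->.
Qed.
Lemma wpow_ab m : wpow tau m = g m.
Proof. by case: m. Qed.
Lemma wpow_ba m : wpow sig m = g (- m).
Proof.
case: m => k.
  by rewrite g_neg ?oppr_le0 // abszN.
by rewrite /g NegzE opprK /=.
Qed.
Lemma g_rev m : rev (g m) = g (- m).
Proof.
rewrite /g; case: (ltgtP m 0) => [h|h|->] //.
- by rewrite pw_rev /= oppr_ge0 (ltW h) abszN.
- by rewrite pw_rev /= oppr_ge0 leNgt h abszN.
Qed.
Lemma g_inv m : E (g m ++ g (- m)) [::].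
Proof. rewrite -g_rev; exact: E_inv. Qed.

Lemma g_comm w : E (w ++ tau) (tau ++ w) -> E (w ++ sig) (sig ++ w) ->
  forall m, E (w ++ g m) (g m ++ w).
Proof. move=> h1 h2 m; rewrite /g; case: ifP => _; exact: pw_lift. Qed.
Lemma g_flip w : E (w ++ tau) (sig ++ w) -> E (w ++ sig) (tau ++ w) ->
  forall m, E (w ++ g m) (g (- m) ++ w).
Proof.
move=> h1 h2 m; rewrite -g_rev /g; case: ifP => _; rewrite pw_rev /=; exact: pw_lift.
Qed.
End G.

Arguments fix_comm {z w} _.
Arguments fix_rev {z w} _.
Arguments pw_lift {x y z} n _.
Arguments pw_liftl {x y} n _.
Arguments pw_fix {z w} n _.
Lemma mv u v t t' t'' : E (v ++ t) (t' ++ v) -> E (u ++ t') (t'' ++ u) ->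
  E ((u ++ v) ++ t) (t'' ++ (u ++ v)).
Proof. move=> h1 h2. by rewrite -catA h1 catA h2 catA. Qed.
Lemma pw_E u v n : E u v -> E (pw u n) (pw v n).
Proof. move=> h; elim: n => [|n IH] //. by rewrite !pwS; apply: cat_prop. Qed.
Arguments pw_E {u v} n _.

Local Open Scope ring_scope.
Section Main.
Variables a b c : T.
Hypothesis R1 : act op c [:: a; b] = c.
Local Notation tau := [:: a; b].
Local Notation sig := [:: b; a].
Local Notation P := (pw [:: c; a]).
Local Notation Q := (pw [:: a; c]).
Local Notation G := (g a b).

Lemma Ea_t : E ([:: a] ++ tau) (sig ++ [:: a]).
Proof. by move=> x; rewrite /act /= !invo. Qed.
Lemma Ea_s : E ([:: a] ++ sig) (tau ++ [:: a]).
Proof. by []. Qed.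
Lemma Eb_t : E ([:: b] ++ tau) (sig ++ [:: b]).
Proof. by []. Qed.
Lemma Eb_s : E ([:: b] ++ sig) (tau ++ [:: b]).
Proof. by move=> x; rewrite /act /= !invo. Qed.
Lemma R1s : act op c sig = c.
Proof. exact: (fix_rev R1). Qed.
Lemma Ec_t : E ([:: c] ++ tau) (tau ++ [:: c]).
Proof. exact: fix_comm R1. Qed.
Lemma Ec_s : E ([:: c] ++ sig) (sig ++ [:: c]).
Proof. exact: fix_comm R1s. Qed.
Lemma fa m : E ([:: a] ++ G m) (G (- m) ++ [:: a]).
Proof. apply: g_flip; [exact: Ea_t|exact: Ea_s]. Qed.
Lemma fb m : E ([:: b] ++ G m) (G (- m) ++ [:: b]).
Proof. apply: g_flip; [exact: Eb_t|exact: Eb_s]. Qed.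
Lemma fc m : E ([:: c] ++ G m) (G m ++ [:: c]).
Proof. apply: g_comm; [exact: Ec_t|exact: Ec_s]. Qed.
Lemma cG m : act op c (G m) = c.
Proof. rewrite /g; case: ifP => _; apply: pw_fix; [exact: R1|exact: R1s]. Qed.
Lemma ac_flip m : E ([:: a; c] ++ G m) (G (- m) ++ [:: a; c]).
Proof.
have -> : [:: a; c] = [:: a] ++ [:: c] by [].
apply: mv; [exact: fc| exact: fa].
Qed.
Lemma ca_flip m : E ([:: c; a] ++ G m) (G (- m) ++ [:: c; a]).
Proof.
have -> : [:: c; a] = [:: c] ++ [:: a] by [].
apply: mv; [exact: fa| exact: fc].
Qed.
Lemma acac m : E ([:: a; c; a; c] ++ G m) (G m ++ [:: a; c; a; c]).
Proof.
have -> : [:: a; c; a; c] = [:: a; c] ++ [:: a; c] by [].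
rewrite -{2}(opprK m).
apply: mv; [exact: ac_flip| exact: ac_flip].
Qed.
Lemma caca m : E ([:: c; a; c; a] ++ G m) (G m ++ [:: c; a; c; a]).
Proof.
have -> : [:: c; a; c; a] = [:: c; a] ++ [:: c; a] by [].
rewrite -{2}(opprK m).
apply: mv; [exact: ca_flip| exact: ca_flip].
Qed.
Lemma Q_move i m : exists m', E (Q i ++ G m) (G m' ++ Q i).
Proof.
elim: i m => [|i IH] m; first by exists m; rewrite cats0.
have [m' h] := IH m.
exists (- m'); rewrite pwS.
by apply: mv; [exact: h|exact: ac_flip].
Qed.
Lemma PcQ i : P i ++ [:: c] = c :: Q i.
Proof. elim: i => [|i IH] //. by rewrite pwS /= IH. Qed.
Lemma QacS i : Q i ++ [:: a; c] = [:: a; c] ++ Q i.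
Proof. by rewrite -pwSr. Qed.
Lemma revQ i : rev (Q i) = P i. Proof. by rewrite pw_rev. Qed.
Lemma revP i : rev (P i) = Q i. Proof. by rewrite pw_rev. Qed.

Lemma G7 i : act op c (Q i ++ [:: a]) = act op c (Q i ++ [:: b]).
Proof.
have h1 : E [:: b] ([:: a] ++ tau) by move=> x; rewrite /act /= invo.
rewrite h1 catA -catA Ea_t.
have h2 : E sig (G (-1)) by move=> x; rewrite /g /pw /=.
rewrite h2.
have [m' h] := Q_move i (-1).
by rewrite catA h -catA [RHS]actcat cG.
Qed.

Lemma G5 i j : act op a (P i ++ pw sig j ++ [:: c]) = act op a (P i ++ [:: c] ++ pw sig j).
Proof. by rewrite -(pw_lift j Ec_s). Qed.

Lemma G6 i j : act op a (P i ++ pw tau j ++ [:: a; b; c])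
  = act op a (P i.+1 ++ pw sig j ++ [:: b]).
Proof.
rewrite pwSr -catA.
apply: act_prop; apply: cat_prop; first reflexivity.
have -> : [:: c; a] ++ pw sig j ++ [:: b] = [:: c] ++ ([:: a] ++ pw sig j) ++ [:: b] by [].
rewrite (pw_lift j Ea_s) -catA catA (pw_lift j Ec_t) -catA /=.
have -> : [:: c; a; b] = [:: c] ++ tau by [].
by rewrite Ec_t.
Qed.


Lemma cab : op c a = op c b.
Proof. by rewrite -{2}R1 /act /= invo. Qed.

Variables (q' : nat) (n : int).
Hypothesis R2 : act op a (P q') = act op b (G n).
Hypothesis R3 : act op a (Q q') = act op b (G n).

Lemma G2 : act op a (P (q' + q')) = a.
Proof. by rewrite pwD actcat R2 -R3 -actcat -revQ E_inv. Qed.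
Lemma G2' : act op a (Q (q' + q')) = a.
Proof. by rewrite -revP; apply: fix_rev; exact: G2. Qed.

Lemma cd : act op c [:: act op b (G n)] = op c b.
Proof.
rewrite E_conj g_rev actcat cG.
have -> : b :: G n = [:: b] ++ G n by [].
by rewrite fb actcat cG.
Qed.

Lemma G1 : act op c (Q (q' + q')) = c.
Proof.
have h := cd; rewrite -R3 E_conj revQ -cab in h.
have e1 : c = act op (op c a) [:: a; c] by rewrite /act /= invo idm.
rewrite [RHS]e1 -h -actcat -catA /=.
have e2 : E (P q' ++ a :: Q q' ++ [:: a; c]) ((P q' ++ [:: c]) ++ c :: a :: Q q' ++ [:: a; c]).
  rewrite -catA /=; apply: cat_prop; first reflexivity.
  by move=> x; rewrite /act /= invo.
rewrite e2 PcQ /= idm.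
rewrite QacS /=.
have e3 : E (c :: a :: a :: c :: Q q') (Q q') by move=> x; rewrite /act /= !invo.
by rewrite e3 pwD.
Qed.

Lemma cbcb : E [:: c; b; c; b] [:: c; a; c; a].
Proof.
move=> x; rewrite /act /=; set y := op x c.
have E1 := Ec_t (op y a); rewrite /act /= invo in E1.
by rewrite -E1 invo.
Qed.
Lemma bcbc : E [:: b; c; b; c] [:: a; c; a; c].
Proof.
move=> x; rewrite /act /=.
have E1 := Ec_t (op x a); rewrite /act /= invo in E1.
by rewrite -E1 invo.
Qed.
Lemma bback : act op (act op b (G n)) (G (- n)) = b.
Proof. by rewrite -actcat g_inv. Qed.

Lemma G3 : act op b (pw [:: c; b] (q' + q')) = b.
Proof.
rewrite addnn pw2 /= (pw_E q' cbcb).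
rewrite -{1}bback -R3 -!actcat.
have h : E (G (- n) ++ pw [:: c; a; c; a] q') (pw [:: c; a; c; a] q' ++ G (- n)).
  symmetry; exact: (pw_liftl q' (caca (- n))).
rewrite h catA.
have -> : pw [:: c; a; c; a] q' = P q' ++ P q' by rewrite -pwD addnn pw2.
rewrite catA -revQ E_inv /= actcat revQ R2; exact: bback.
Qed.

Lemma G4 : act op a (G (- n)) = act op b (pw [:: b; c] q').
Proof.
have := odd_double_half q'; set r := q'./2; case: (odd q') => /= hq.
- have he : act op (act op c (Q r)) tau = act op c (Q r).
    have -> : tau = [:: a] ++ [:: b] by [].
    have -> : act op (act op c (Q r)) ([:: a] ++ [:: b]) = act op (act op c (Q r ++ [:: a])) [:: b].
      by rewrite !actcat.
    by rewrite G7 actcat /act /= invo.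
  set e := act op c (Q r) in he *.
  have hc m : E ([:: e] ++ G m) (G m ++ [:: e]).
    apply: g_comm; [exact: fix_comm he| exact: fix_comm (fix_rev he)].
  have e1 : P r ++ c :: Q r = c :: Q (r.*2) by rewrite -addnn pwD -[c :: Q r]cat1s catA PcQ.
  have hd : act op a (Q q') = act op a [:: e] by rewrite E_conj revQ e1 -hq /act /= idm.
  rewrite -hq pwS /= idm pw2 /= (pw_E r bcbc) -[pw [:: a; c; a; c] r]/(pw ([:: a; c] ++ [:: a; c]) r) -pw2.
  rewrite -[op b c]/(act op b [:: c]) -actcat.
  rewrite -[X in _ = act op X _]bback -R3 hd -!actcat catA hc -catA.
  have hz : E ([:: e] ++ c :: Q (r.*2)) [::].
    rewrite /e E_conj revQ e1 -{1}PcQ -catA /= E_yy -revQ; exact: E_inv'.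
  by rewrite hz cats0.
- rewrite -hq pw2 /= (pw_E r bcbc) -[pw [:: a; c; a; c] r]/(pw ([:: a; c] ++ [:: a; c]) r) -pw2.
  rewrite -[X in _ = act op X _]bback -R3 -hq -!actcat.
  have h : E (G (- n) ++ Q (r.*2)) (Q (r.*2) ++ G (- n)).
    rewrite pw2 /=; symmetry; exact: (pw_liftl r (acac (- n))).
  have := G2'; rewrite -hq => h2.
  by rewrite h catA -pwD actcat h2.
Qed.

End Main.
End Q.

From mathcomp Require Import zify.
Local Open Scope ring_scope.

Theorem lemma4p3 (k p q : int) :
  0 < q -> gcdz p q = 1%N -> odd (absz (k * q - p)%R) ->
  forall (T : Type) (op : T -> T -> T) (a b c : T),
  inv_quandle op ->
  (* R1 *) act op c [:: a; b] = c ->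
  (* R2 *) act op a (wpow [:: c; a] q) = act op b (wpow [:: a; b] ((k * q - p - 1) %/ 2)%Z) ->
  (* R3 *) act op a (wpow [:: a; c] q) = act op b (wpow [:: a; b] ((k * q - p - 1) %/ 2)%Z) ->
  (act op c (wpow [:: a; c] (2 * q)) = c) /\
      (act op a (wpow [:: c; a] (2 * q)) = a) /\
      (      act op b (wpow [:: c; b] (2 * q)) = b) /\
      (      act op a (wpow [:: b; a] ((k * q - p - 1) %/ 2)%Z) = act op b (wpow [:: b; c] q)) /\
      (forall i j : nat, (i%:Z <= q) -> (j%:Z <= (`|k * q - p| - 1) %/ 2)%Z ->
         act op a (wpow [:: c; a] i%:Z ++ wpow [:: b; a] j%:Z ++ [:: c])
         = act op a (wpow [:: c; a] i%:Z ++ [:: c] ++ wpow [:: b; a] j%:Z)) /\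
      (forall i j : nat, (i%:Z <= q) -> (j%:Z <= (`|k * q - p| - 1) %/ 2)%Z ->
         act op a (wpow [:: c; a] i%:Z ++ wpow [:: a; b] j%:Z ++ [:: a; b; c])
         = act op a (wpow [:: c; a] i.+1%:Z ++ wpow [:: b; a] j%:Z ++ [:: b])) /\
      (forall i : nat,
         act op c (wpow [:: a; c] i%:Z ++ [:: a]) = act op c (wpow [:: a; c] i%:Z ++ [:: b])).
Proof.
case: q => [q'|q'] // hq _ _ T op a b c HQ R1.
set n := ((k * q'%:Z - p - 1) %/ 2)%Z.
move=> R2 R3; rewrite (@wpow_ab T a b) in R2 R3.
have h2 : (2 * q'%:Z = (q' + q')%N%:Z) by lia.
rewrite h2.
split; first exact (G1 _ _ HQ _ _ _ R1 _ _ R3).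
split; first exact (G2 _ _ HQ _ _ _ _ _ R2 R3).
split; first exact (G3 _ _ HQ _ _ _ R1 _ _ R2 R3).
split; first by rewrite (@wpow_ba T a b); exact (G4 _ _ HQ _ _ _ R1 _ _ R2 R3).
split; first by move=> i j _ _; exact (G5 _ _ HQ _ _ _ R1 i j).
split; first by move=> i j _ _; exact (G6 _ _ HQ _ _ _ R1 i j).
by move=> i; exact (G7 _ _ HQ _ _ _ R1 i).
Qed.
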